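(* For all positive integers $n,m$, the zero-error (Las Vegas) randomized query complexity of $f_{n,m}$ satisfies $R_0(f_{n,m})=\tilde O(n+m)$.
   Context: Let $n,m$ be positive integers, $M=[n]\times[m]$ (a grid of cells with $n$ rows and $m$ columns), $\tilde M = M\cup\{\bot\}$ (pointers to cells, $\bot$ is the null pointer) and $\tilde C=[m]\cup\{\bot\}$ (pointers to columns). Let $T$ be the following fixed binary tree with $m$ leaves and $m-1$ internal nodes: if $m=2^k$, $T$ is the complete binary tree with $2^k$ leaves; if $2^k<m<2^{k+1}$, take the complete binary tree with $2^k$ leaves and add a pair of children to each of its $m-2^k$ leftmost leaves. The two outgoing arcs of each internal node are labeled 'left' and 'right', and the leaves are labeled $1,\dots,m$ from left to right. For a leaf $j$, $T(j)$ denotes the sequence of 'left'/'right' labels on the path from the root to leaf $j$. The input alphabet is $\Sigma=\{0,1\}\times\tilde M\times\tilde M\times\tilde C$; for $v\in\Sigma$ its four components are called $\mathrm{val}(v)$, $\mathrm{lpoint}(v)$, $\mathrm{rpoint}(v)$, $\mathrm{bpoint}(v)$. The function $f_{n,m}\colon\Sigma^M\to\{0,1\}$ is defined by $f_{n,m}(x)=1$ iff: (1) there is exactly one column $b\in[m]$ with $\mathrm{val}(x_{i,b})=1$ for all $i\in[n]$ (the marked column); (2) in column $b$ there is a unique cell $a$ with $x_a\ne(1,\bot,\bot,\bot)$ (the special element); (3) for each column $j\in[m]\setminus\{b\}$, the path starting at $a$ and following the pointers $\mathrm{lpoint},\mathrm{rpoint}$ as specified by the sequence $T(j)$ exists (no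 pointer on it is $\bot$) and ends in a cell $\ell_j$ lying in column $j$ with $\mathrm{val}(x_{\ell_j})=0$; (4) $\mathrm{bpoint}(x_{\ell_j})=b$ for every $j\in[m]\setminus\{b\}$. A query asks for the value $x_c\in\Sigma$ of one cell $c\in M$. A randomized decision tree is a probability distribution over deterministic decision trees; $R_0(f)$ is the minimum, over randomized decision trees all of whose deterministic trees in the support compute $f$ exactly, of the maximum over inputs $x$ of the expected number of queries on $x$. $\tilde O(\cdot)$ hides factors polylogarithmic in $n$ and $m$. *)

(* Defs.v *)
From HB Require Import structures.
From mathcomp Require Import all_boot all_order all_algebra.
From mathcomp Require Import all_classical all_reals.
Set Implicit Arguments. Unset Strict Implicit. Unset Printing Implicit Defensive.
Import Order.TTheory GRing.Theory Num.Theory.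
Local Open Scope ring_scope.

Inductive btree := BLeaf | BNode of btree & btree.

Fixpoint complete_tree (k : nat) : btree :=
  if k is k'.+1 then BNode (complete_tree k') (complete_tree k') else BLeaf.

(* add a pair of children to each of the r leftmost leaves;
   returns the new tree and the number of leaves still to be expanded *)
Fixpoint grow (r : nat) (t : btree) : btree * nat :=
  match t with
  | BLeaf => if r is S r' then (BNode BLeaf BLeaf, r') else (BLeaf, 0)
  | BNode l rt =>
      let (l', r1) := grow r l in
      let (rt', r2) := grow r1 rt in (BNode l' rt', r2)
  end.

(* root-to-leaf paths, leaves listed from left to right;
   false = 'left', true = 'right' *)
Fixpoint leaf_paths (t : btree) : seq (seq bool) :=
  match t with
  | BLeaf => [:: [::]]
  | BNode l r => map (cons false) (leaf_paths l) ++ map (cons true) (leaf_paths r)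
  end.

Definition Ttree (m : nat) : btree :=
  let k := trunc_log 2 m in (grow (m - 2 ^ k) (complete_tree k)).1.

(* T(j) for the leaf labelled j+1, j : 'I_m (columns are 0-indexed here) *)
Definition Tpath (m : nat) (j : 'I_m) : seq bool := nth [::] (leaf_paths (Ttree m)) j.

Definition cell (n m : nat) := ('I_n * 'I_m)%type.
(* Sigma = {0,1} x ~M x ~M x ~C, with None playing the role of bottom *)
Definition Sigma (n m : nat) :=
  (bool * option (cell n m) * option (cell n m) * option 'I_m)%type.

Definition val_of {n m} (v : Sigma n m) : bool := v.1.1.1.
Definition lpoint {n m} (v : Sigma n m) : option (cell n m) := v.1.1.2.
Definition rpoint {n m} (v : Sigma n m) : option (cell n m) := v.1.2.
Definition bpoint {n m} (v : Sigma n m) : option 'I_m := v.2.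

Definition blank (n m : nat) : Sigma n m := (true, None, None, None).

Fixpoint follow {n m} (x : cell n m -> Sigma n m) (a : cell n m) (s : seq bool)
  : option (cell n m) :=
  match s with
  | [::] => Some a
  | d :: s' =>
      match (if d then rpoint (x a) else lpoint (x a)) with
      | Some c => follow x c s'
      | None => None
      end
  end.

Definition marked_col {n m} (x : cell n m -> Sigma n m) (b : 'I_m) : bool :=
  [forall i : 'I_n, val_of (x (i, b))].

Definition f_nm (n m : nat) (x : cell n m -> Sigma n m) : bool :=
  [exists b : 'I_m,
    [&& marked_col x b,
        [forall b' : 'I_m, marked_col x b' ==> (b' == b)] &
        [exists i : 'I_n,
          [&& x (i, b) != blank n m,
              [forall i' : 'I_n, (i' != i) ==> (x (i', b) == blank n m)] &
              [forall j : 'I_m, (j != b) ==>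
                 match follow x (i, b) (Tpath j) with
                 | Some l => [&& l.2 == j, ~~ val_of (x l) & bpoint (x l) == Some b]
                 | None => false
                 end]]]]].

Inductive dtree (I A : Type) :=
  | DOut of bool
  | DQuery of I & (A -> dtree I A).
Arguments DOut {I A}.
Arguments DQuery {I A}.

Fixpoint run {I A} (t : dtree I A) (x : I -> A) : bool * nat :=
  match t with
  | DOut b => (b, 0)
  | DQuery i k => let r := run (k (x i)) x in (r.1, S r.2)
  end.

Definition computes {I A} (t : dtree I A) (f : (I -> A) -> bool) : Prop :=
  forall x, (run t x).1 = f x.

(* a randomized decision tree: a (finitely supported) probability
   distribution over deterministic decision trees *)
Definition rdtree (R : realType) (I A : Type) := seq (R * dtree I A).

Definition is_distr {R : realType} {I A} (D : rdtree R I A) : Prop :=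
  (forall p, p \in map fst D -> 0 <= p) /\ \sum_(p <- D) p.1 = 1.

Definition zero_error {R : realType} {I A} (D : rdtree R I A) (f : (I -> A) -> bool) : Prop :=
  is_distr D /\ forall i : nat, (i < size D)%N ->
    let pt := nth (0, DOut false) D i in 0 < pt.1 -> computes pt.2 f.

Definition exp_queries {R : realType} {I A} (D : rdtree R I A) (x : I -> A) : R :=
  \sum_(pt <- D) pt.1 * ((run pt.2 x).2)%:R.

(* Main.v *)
Require Import Defs.
From HB Require Import structures.
From mathcomp Require Import all_boot all_order all_algebra.
From mathcomp Require Import all_classical all_reals.
From mathcomp Require Import zify ring lra.
Import Order.TTheory GRing.Theory Num.Theory.
Set Implicit Arguments. Unset Strict Implicit. Unset Printing Implicit Defensive.


Inductive Q (I A X : Type) := Ret of X | Ask of I & (A -> Q I A X).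
Arguments Ret {I A X}. Arguments Ask {I A X}.

Fixpoint bindQ {I A X Y} (q : Q I A X) (f : X -> Q I A Y) : Q I A Y :=
  match q with Ret v => f v | Ask i k => Ask i (fun a => bindQ (k a) f) end.

Fixpoint runQ {I A X} (q : Q I A X) (x : I -> A) : X * nat :=
  match q with Ret v => (v, 0%N)
  | Ask i k => let r := runQ (k (x i)) x in (r.1, r.2.+1) end.

Fixpoint toD {I A} (q : Q I A bool) : dtree I A :=
  match q with Ret b => DOut b | Ask i k => DQuery i (fun a => toD (k a)) end.

Lemma run_toD I A (q : Q I A bool) x : run (toD q) x = runQ q x.
Proof. by elim: q => //= i k IH; rewrite IH. Qed.

Lemma runQ_bind1 I A X Y (q : Q I A X) (f : X -> Q I A Y) x :
  (runQ (bindQ q f) x).1 = (runQ (f (runQ q x).1) x).1.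
Proof. by elim: q => //= i k IH. Qed.

Lemma runQ_bind2 I A X Y (q : Q I A X) (f : X -> Q I A Y) x :
  (runQ (bindQ q f) x).2 = ((runQ q x).2 + (runQ (f (runQ q x).1) x).2)%N.
Proof. by elim: q => //= i k IH; rewrite IH. Qed.

Fixpoint queryAll {I A} (l : seq I) : Q I A (seq A) :=
  if l is i :: l' then Ask i (fun v => bindQ (queryAll l') (fun vs => Ret (v :: vs)))
  else Ret [::].

Lemma queryAll1 I A (l : seq I) (x : I -> A) : (runQ (queryAll l) x).1 = map x l.
Proof. by elim: l => //= i l IH; rewrite runQ_bind1 IH. Qed.

Lemma queryAll2 I A (l : seq I) (x : I -> A) : (runQ (queryAll l) x).2 = size l.
Proof. by elim: l => //= i l IH; rewrite runQ_bind2 IH addn0. Qed.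

Fixpoint searchQ {I A} (p : A -> bool) (l : seq I) : Q I A (option I) :=
  if l is i :: l' then Ask i (fun v => if p v then Ret (Some i) else searchQ p l')
  else Ret None.

Lemma searchQ2 I A p (l : seq I) (x : I -> A) : ((runQ (searchQ p l) x).2 <= size l)%N.
Proof. by elim: l => //= i l IH; case: (p (x i)). Qed.

Lemma searchQ_None I A p (l : seq I) (x : I -> A) :
  isSome (runQ (searchQ p l) x).1 = has (fun i => p (x i)) l.
Proof. by elim: l => //= i l IH; case: (p (x i)). Qed.

Lemma searchQ_Some I A p (l : seq I) (x : I -> A) c :
  (runQ (searchQ p l) x).1 = Some c -> p (x c).
Proof. elim: l => //= i l IH; case E: (p (x i)) => /=; [by case=> <- | exact: IH]. Qed.

Fixpoint allQ {I A T} (l : seq T) (g : T -> Q I A bool) : Q I A bool :=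
  if l is t :: l' then bindQ (g t) (fun b => bindQ (allQ l' g) (fun b' => Ret (b && b')))
  else Ret true.

Lemma allQ1 I A T (l : seq T) (g : T -> Q I A bool) x :
  (runQ (allQ l g) x).1 = all (fun t => (runQ (g t) x).1) l.
Proof. by elim: l => //= t l IH; rewrite !runQ_bind1 /= IH. Qed.

Lemma allQ2 I A T (l : seq T) (g : T -> Q I A bool) x :
  (runQ (allQ l g) x).2 = (\sum_(t <- l) (runQ (g t) x).2)%N.
Proof.
elim: l => [|t l IH]; first by rewrite big_nil.
by rewrite big_cons /= runQ_bind2 runQ_bind2 /= IH addn0.
Qed.

Fixpoint followQ {n m} (a : cell n m) (s : seq bool) : Q (cell n m) (Sigma n m) (option (cell n m)) :=
  match s with
  | [::] => Ret (Some a)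
  | d :: s' => Ask a (fun v => match (if d then rpoint v else lpoint v) with
                              | Some c => followQ c s' | None => Ret None end)
  end.

Lemma followQ1 n m (x : cell n m -> Sigma n m) a s : (runQ (followQ a s) x).1 = follow x a s.
Proof.
elim: s a => //= d s IH a.
by case: (if d then rpoint (x a) else lpoint (x a)).
Qed.

Lemma followQ2 n m (x : cell n m -> Sigma n m) a s : ((runQ (followQ a s) x).2 <= size s)%N.
Proof.
elim: s a => //= d s IH a.
by case: (if d then rpoint (x a) else lpoint (x a)).
Qed.

Fixpoint all_seqs {T} (l : seq T) (k : nat) : seq (seq T) :=
  if k is k'.+1 then [seq x :: s | x <- l, s <- all_seqs l k'] else [:: [::]].

Lemma size_all_seqs T (l : seq T) k : size (all_seqs l k) = (size l ^ k)%N.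
Proof. by elim: k => //= k IH; rewrite size_allpairs IH expnS. Qed.

Lemma sum_count T (l : seq T) (p : pred T) : (\sum_(x <- l) p x)%N = count p l.
Proof. by elim: l => [|x l IH]; rewrite ?big_nil // big_cons IH. Qed.

Lemma sum_take_all T (l : seq T) p k L : (L <= k)%N ->
  (\sum_(s <- all_seqs l k) all p (take L s))%N = (count p l ^ L * size l ^ (k - L))%N.
Proof.
elim: k L => [|k IH] L.
  by rewrite leqn0 => /eqP ->; rewrite /= big_cons big_nil.
case: L => [_|L HL].
  rewrite subn0 -size_all_seqs -sum1_size mul1n.
  by apply: eq_bigr => s _; rewrite take0.
rewrite /= big_allpairs_dep /=.
rewrite (eq_bigr (fun x => p x * (count p l ^ L * size l ^ (k - L))))%N; last first.
  move=> x _; rewrite -IH //.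
  rewrite big_distrr /=; apply: eq_bigr => s _.
  by case: (p x); rewrite /= ?mul1n ?mul0n.
by rewrite -big_distrl /= sum_count subSS expnS mulnA.
Qed.

Lemma bern u z c : (u ^ c.+1 + c.+1 * z * u ^ c <= (u + z) ^ c.+1)%N.
Proof.
elim: c => [|c IH]; first by rewrite !expn1 expn0 mul1n muln1.
rewrite (expnS (u + z)) (expnS u) (expnS u c).
set P := (u ^ c)%N; set Q := ((u + z) ^ c.+1)%N.
move: IH; rewrite -/P -/Q expnS -/P => IH.
have : ((u + z) * (u * P + c.+1 * z * P) <= (u + z) * Q)%N by rewrite leq_mul2l IH orbT.
nia.
Qed.

Lemma two_pow u z c : (0 < c)%N -> (u <= c * z)%N -> (2 * u ^ c <= (u + z) ^ c)%N.
Proof.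
case: c => // c _ Huc.
apply: leq_trans (bern u z c).
rewrite (expnS u c); set P := (u ^ c)%N.
have : (u * P <= c.+1 * z * P)%N by rewrite leq_mul2r Huc orbT.
nia.
Qed.

Lemma rich_count n a z : (0 < a)%N -> (0 < n)%N -> (a <= 2 * z)%N -> (z <= n)%N ->
  (a * (n - z) ^ ((2 * n + a - 1) %/ a * up_log 2 a) <= n ^ ((2 * n + a - 1) %/ a * up_log 2 a))%N.
Proof.
move=> Ha Hn Haz Hzn.
set c := ((2 * n + a - 1) %/ a)%N; set k := up_log 2 a.
have Hca : (2 * n <= c * a)%N.
  have := ltn_ceil (2 * n + a - 1) Ha. rewrite -/c.
  have E := divn_eq (2 * n + a - 1) a; rewrite -/c in E.
  have := ltn_pmod (2 * n + a - 1) Ha. lia.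
have Hc : (0 < c)%N.
  rewrite /c divn_gt0 //; lia.
have H2 : (2 * (n - z) ^ c <= n ^ c)%N.
  have -> : n = ((n - z) + z)%N by rewrite subnK.
  rewrite addnK; apply: two_pow => //.
  nia.
have Hak : (a <= 2 ^ k)%N by apply: up_logP.
rewrite !expnM.
apply: (@leq_trans ((2 ^ k) * ((n - z) ^ c) ^ k)%N).
  by rewrite leq_mul2r Hak orbT.
rewrite -expnMn.
have [->|Hk] := posnP k; first by rewrite !expn0.
by rewrite leq_exp2r.
Qed.

Fixpoint height (t : btree) : nat :=
  if t is BNode l r then (maxn (height l) (height r)).+1 else 0%N.

Lemma paths_height t p : p \in leaf_paths t -> (size p <= height t)%N.
Proof.
elim: t p => [|l IHl r IHr] p /=; first by rewrite inE => /eqP ->.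
rewrite mem_cat => /orP [] /mapP [q Hq ->] /=; rewrite ltnS.
  by rewrite (leq_trans (IHl _ Hq)) // leq_maxl.
by rewrite (leq_trans (IHr _ Hq)) // leq_maxr.
Qed.

Lemma height_complete k : height (complete_tree k) = k.
Proof. by elim: k => //= k ->; rewrite maxnn. Qed.

Lemma height_grow r t : (height (grow r t).1 <= (height t).+1)%N.
Proof.
elim: t r => [|l IHl rt IHr] r /=; first by case: r.
case E1: (grow r l) => [l' r1]; case E2: (grow r1 rt) => [rt' r2] /=.
have H1 := IHl r; have H2 := IHr r1; rewrite E1 /= in H1; rewrite E2 /= in H2.
rewrite ltnS geq_max; apply/andP; split.
  by rewrite (leq_trans H1) // ltnS leq_maxl.
by rewrite (leq_trans H2) // ltnS leq_maxr.
Qed.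

Lemma Tpath_size m (j : 'I_m) : (size (Tpath j) <= (trunc_log 2 m).+1)%N.
Proof.
rewrite /Tpath.
have [Hj|Hj] := ltnP j (size (leaf_paths (Ttree m))); last by rewrite nth_default.
apply: leq_trans (paths_height (mem_nth _ Hj)) _.
by rewrite /Ttree; apply: leq_trans (height_grow _ _) _; rewrite height_complete.
Qed.

Section Harm.
Variable R : realType.
Local Open Scope ring_scope.

Lemma harm2 t : \sum_(k < 2 ^ t) (k.+1%:R : R)^-1 <= t.+1%:R.
Proof.
elim: t => [|t IH]; first by rewrite expn0 big_ord1 invr1.
rewrite expnS mul2n -addnn big_split_ord /=.
rewrite [X in _ <= X]mulrSr lerD //.
apply: (@le_trans _ _ (\sum_(k < 2 ^ t) ((2 ^ t)%:R : R)^-1)).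
  apply: ler_sum => k _ /=.
  rewrite lef_pV2 ?posrE ?ltr0n ?expn_gt0 // ler_nat; lia.
rewrite sumr_const card_ord -[X in X <= _]mulr_natr mulVf //.
by rewrite pnatr_eq0 expn_eq0.
Qed.

Lemma harm m : \sum_(k < m) (k.+1%:R : R)^-1 <= (up_log 2 m).+1%:R.
Proof.
apply: le_trans (harm2 (up_log 2 m)).
rewrite (big_ord_widen _ (fun k => (k.+1%:R : R)^-1) (up_logP m (isT : (1 < 2)%N))).
rewrite big_mkcond /=; apply: ler_sum => k _.
by case: ifP => // _; rewrite invr_ge0 ler0n.
Qed.
End Harm.

Lemma searchQ_map I A T p (f : T -> I) (s : seq T) (x : I -> A) c :
  (runQ (searchQ p (map f s)) x).1 = Some c -> exists t, c = f t.
Proof.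
elim: s => //= t s IH; case: (p (x (f t))) => /=.
  by case=> <-; exists t.
exact: IH.
Qed.

Section Alg.
Variables n m : nat.
Local Notation cell := (cell n m).
Local Notation Sig := (Sigma n m).
Implicit Types x : cell -> Sig.

Definition colcells (j : 'I_m) : seq cell := [seq (i, j) | i <- enum 'I_n].

Definition leafQ (b : 'I_m) (a : cell) (j : 'I_m) : Q cell Sig bool :=
  bindQ (followQ a (Tpath j)) (fun r => match r with
    | None => Ret false
    | Some l => Ask l (fun v => Ret [&& l.2 == j, ~~ val_of v & bpoint v == Some b]) end).

Definition verifyQ (b : 'I_m) : Q cell Sig bool :=
  bindQ (queryAll (colcells b)) (fun vs =>
    match [pick i : 'I_n | nth (blank n m) vs i != blank n m] with
    | None => Ret false
    | Some i => if [forall i' : 'I_n, (i' != i) ==> (nth (blank n m) vs i' == blank n m)]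
                then allQ (enum 'I_m) (fun j => if j == b then Ret true else leafQ b (i, b) j)
                else Ret false
    end).

Definition leafc x (b j : 'I_m) (l' : option cell) :=
  match l' with
  | Some l => [&& l.2 == j, ~~ val_of (x l) & bpoint (x l) == Some b]
  | None => false
  end.

Definition Ecol x (b : 'I_m) :=
  [exists i : 'I_n,
          [&& x (i, b) != blank n m,
              [forall i' : 'I_n, (i' != i) ==> (x (i', b) == blank n m)] &
              [forall j : 'I_m, (j != b) ==>
                 match follow x (i, b) (Tpath j) with
                 | Some l => [&& l.2 == j, ~~ val_of (x l) & bpoint (x l) == Some b]
                 | None => false
                 end]]].

Definition Wf x b := [&& marked_col x b,
        [forall b' : 'I_m, marked_col x b' ==> (b' == b)] & Ecol x b].

Lemma f_nmE x : f_nm x = [exists b, Wf x b].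
Proof. by []. Qed.

Lemma nth_col x b (i : 'I_n) : nth (blank n m) (map x (colcells b)) i = x (i, b).
Proof.
by rewrite /colcells -map_comp (nth_map i) ?size_enum_ord // nth_ord_enum.
Qed.

Lemma leafQ1 x b a j : (runQ (leafQ b a j) x).1 = leafc x b j (follow x a (Tpath j)).
Proof.
by rewrite /leafQ runQ_bind1 followQ1; case: (follow x a (Tpath j)).
Qed.

Lemma leafQ2 x b a j : ((runQ (leafQ b a j) x).2 <= (size (Tpath j)).+1)%N.
Proof.
rewrite /leafQ runQ_bind2; have := followQ2 x a (Tpath j).
by case: (runQ (followQ a (Tpath j)) x).1 => [l|] /=; rewrite ?addn0 ?addn1 // => H; apply: leqW.
Qed.

Lemma verifyQ1 x b : (runQ (verifyQ b) x).1 = Ecol x b.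
Proof.
rewrite /verifyQ runQ_bind1 queryAll1.
have Hy : (fun i : 'I_n => nth (blank n m) (map x (colcells b)) i) = (fun i => x (i, b)).
  by apply: boolp.funext => i; rewrite nth_col.
rewrite /Ecol.
case: pickP => [i Hi|H0].
  rewrite nth_col in Hi.
  case: ifP => [Hall|Hnall].
    rewrite allQ1.
    apply/idP/existsP.
      move=> Ha; exists i; rewrite Hi /=.
      apply/andP; split.
        apply/forallP => i'; apply/implyP => Hi'.
        by move/forallP: Hall => /(_ i'); rewrite Hi' nth_col.
      apply/forallP => j; apply/implyP => Hj.
      move/allP: Ha => /(_ j (mem_enum _ j)); rewrite (negbTE Hj) leafQ1.
      by case: (follow x (i, b) (Tpath j)).
    case=> i0 /and3P [H1 H2 H3].
    have Ei : i0 = i.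
      apply/eqP; apply: contraT => Hne.
      by move/forallP: H2 => /(_ i); rewrite eq_sym Hne /= (negbTE Hi).
    subst i0.
    apply/allP => j _; case: eqP => // /eqP Hj.
    rewrite leafQ1; move/forallP: H3 => /(_ j); rewrite Hj /=.
    by case: (follow x (i, b) (Tpath j)).
  apply/esym/negbTE; apply/existsP => [[i0 /and3P [H1 H2 H3]]].
  have Ei : i0 = i.
    apply/eqP; apply: contraT => Hne.
    by move/forallP: H2 => /(_ i); rewrite eq_sym Hne /= (negbTE Hi).
  subst i0.
  move/negP: Hnall; apply; apply/forallP => i'; apply/implyP => Hi'.
  by rewrite nth_col; move/forallP: H2 => /(_ i'); rewrite Hi'.
apply/esym/negbTE; apply/existsP => [[i0 /and3P [H1 H2 H3]]].
by move: (H0 i0); rewrite nth_col H1.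
Qed.

Lemma verify_correct x b : marked_col x b -> Ecol x b = f_nm x.
Proof.
move=> Hb; rewrite f_nmE; apply/idP/existsP.
  move=> HE; exists b; rewrite /Wf Hb HE andbT /=.
  apply/forallP => b'; apply/implyP => Hb'; apply: contraT => Hne.
  case/existsP: HE => i /and3P [_ _ H3].
  move/forallP: H3 => /(_ b'); rewrite Hne /=.
  case E: (follow x (i, b) (Tpath b')) => [[i1 j1]|] //= /and3P [/eqP Ej Hv _].
  subst j1; move/forallP: Hb' => /(_ i1).
  by rewrite (negbTE Hv).
case=> b0 /and3P [Hm0 Hu HE].
move/forallP: Hu => /(_ b); rewrite Hb /= => /eqP Eb.
by rewrite Eb.
Qed.


Definition Lr (a : nat) : nat := ((2 * n + a - 1) %/ a * up_log 2 a)%N.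
Definition zerov (v : Sig) := ~~ val_of v.
Definition hasB (vs : seq Sig) (b : 'I_m) := has (fun v => zerov v && (bpoint v == Some b)) vs.

Fixpoint loopQ (k : nat) (A : seq 'I_m) (seeds : seq (seq 'I_n)) : Q cell Sig bool :=
  match k, A with
  | k'.+1, j :: A0 =>
    bindQ (searchQ zerov [seq (i, j) | i <- take (Lr (size A)) (head [::] seeds)]) (fun r =>
    match r with
    | Some _ => loopQ k' A0 (behead seeds)
    | None => bindQ (queryAll (colcells j)) (fun vs =>
              if all val_of vs then verifyQ j
              else loopQ k' [seq b <- A0 | hasB vs b] (behead seeds))
    end)
  | _, _ => Ret false
  end.

Lemma marked_colE x j : marked_col x j = all val_of (map x (colcells j)).
Proof.
rewrite /marked_col /colcells -map_comp all_map; apply/forallP/allP => H i.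
  by move=> _; apply: H.
by apply: H; rewrite mem_enum.
Qed.

Lemma kill_zero x j i : ~~ val_of (x (i, j)) -> ~~ Wf x j.
Proof.
move=> Hv; rewrite /Wf negb_and; apply/orP; left.
by apply/forallP => /(_ i); rewrite (negbTE Hv).
Qed.

Lemma kill_hasB x j b : b != j -> ~~ hasB (map x (colcells j)) b -> ~~ Wf x b.
Proof.
move=> Hbj Hh; apply/negP => /and3P [_ _ /existsP [i /and3P [_ _ H3]]].
move/forallP: H3 => /(_ j); rewrite eq_sym Hbj /=.
case E: (follow x (i, b) (Tpath j)) => [[i1 j1]|] //= /and3P [/eqP Ej Hv Hb].
subst j1; move/negP: Hh; apply; apply/hasP; exists (x (i1, j)).
  by apply: map_f; rewrite /colcells; apply: map_f; rewrite mem_enum.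
by rewrite /zerov Hv.
Qed.

Lemma loop_correct x k A seeds : uniq A -> (size A <= k)%N ->
  (forall b, b \notin A -> ~~ Wf x b) -> (runQ (loopQ k A seeds) x).1 = f_nm x.
Proof.
elim: k A seeds => [|k IH] A seeds.
  case: A => // _ _ Hd; rewrite f_nmE /=; apply/esym/negbTE/existsP => [[b Hb]].
  by move: (Hd b); rewrite in_nil Hb => /(_ isT).
case: A => [|j A0] Hu Hs Hd.
  rewrite f_nmE /=; apply/esym/negbTE/existsP => [[b Hb]].
  by move: (Hd b); rewrite in_nil Hb => /(_ isT).
move: Hu => /= /andP [HjA0 Hu0].
rewrite runQ_bind1.
case E: (runQ (searchQ _ _) x).1 => [c|] /=.
  have [i Ec] := searchQ_map E.
  have := searchQ_Some E; rewrite Ec /zerov => Hz.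
  apply: IH => // b Hb; case: (b =P j) => [->|/eqP Hbj]; first exact: kill_zero Hz.
  by apply: Hd; rewrite in_cons negb_or Hbj.
rewrite runQ_bind1 queryAll1.
case: ifP => [Hall|Hnall].
  by rewrite verifyQ1 verify_correct // marked_colE.
apply: IH.
- exact: filter_uniq.
- by rewrite size_filter (leq_trans (count_size _ _)).
move=> b; rewrite mem_filter negb_and => /orP [Hh|Hb].
  case: (b =P j) => [->|/eqP Hbj]; last exact: kill_hasB Hh.
  by rewrite /Wf marked_colE Hnall.
case: (b =P j) => [->|/eqP Hbj]; first by rewrite /Wf marked_colE Hnall.
by apply: Hd; rewrite in_cons negb_or Hbj.
Qed.


Lemma verifyQ2 x b : ((runQ (verifyQ b) x).2 <= n + m * (trunc_log 2 m).+2)%N.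
Proof.
rewrite /verifyQ runQ_bind2 queryAll2 size_map size_enum_ord leq_add2l.
case: pickP => [i _|_] //=; case: ifP => // _.
rewrite allQ2.
apply: (@leq_trans (\sum_(j <- enum 'I_m) (trunc_log 2 m).+2)%N).
  apply: leq_sum => j _; case: ifP => // _.
  by apply: leq_trans (leafQ2 _ _ _ _) _; rewrite ltnS Tpath_size.
by rewrite big_const_seq count_predT size_enum_ord iter_addn_0 mulnC.
Qed.

Lemma uniq_size_m (A : seq 'I_m) : uniq A -> (size A <= m)%N.
Proof.
move=> Hu; apply: (@leq_trans (size (enum 'I_m))); last by rewrite size_enum_ord.
by apply: uniq_leq_size => // b _; rewrite mem_enum.
Qed.

Lemma sizeAp x j (A0 : seq 'I_m) : uniq A0 ->
  (size [seq b <- A0 | hasB (map x (colcells j)) b] <= count zerov (map x (colcells j)))%N.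
Proof.
move=> Hu; set vs := map x (colcells j).
pose g (v : Sig) := if zerov v then bpoint v else None.
apply: (@leq_trans (size (pmap g vs))).
  apply: (@leq_trans (size (undup (pmap g vs)))); last exact: size_undup.
  apply: uniq_leq_size; first exact: filter_uniq.
  move=> b; rewrite mem_filter => /andP [/hasP [v Hv /andP [Hz /eqP Hb]] _].
  by rewrite mem_undup mem_pmap; apply/mapP; exists v => //; rewrite /g Hz Hb.
rewrite size_pmap; apply: sub_count => v /=; rewrite /g.
by case: (zerov v).
Qed.

Lemma allval_count (vs : seq Sig) : all val_of vs = (count zerov vs == 0)%N.
Proof. by rewrite eqn0Ngt -has_count has_predC negbK. Qed.

End Alg.

Section Cost.
Variables (R : realType) (n m : nat).
Hypothesis Hn : (0 < n)%N.
Local Open Scope ring_scope.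

Definition Lmax := (2 * n * up_log 2 m)%N.
Definition Sd := all_seqs (enum 'I_n) Lmax.
Definition Vc : nat := (n + m * (trunc_log 2 m).+2)%N.
Definition Fb (a : nat) : R :=
  (n + Vc)%:R + \sum_(k < a) ((Lr n k.+1)%:R + 3 * n%:R / k.+1%:R).

Lemma tF_ge0 k : 0 <= (Lr n k.+1)%:R + 3 * n%:R / k.+1%:R :> R.
Proof. by rewrite addr_ge0 // divr_ge0 // mulr_ge0. Qed.

Lemma FbS a : Fb a.+1 = Fb a + ((Lr n a.+1)%:R + 3 * n%:R / a.+1%:R).
Proof. by rewrite /Fb big_ord_recr /= addrA. Qed.

Lemma Fb_ge0 a : 0 <= Fb a.
Proof. by rewrite /Fb addr_ge0 // sumr_ge0 // => k _; apply: tF_ge0. Qed.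

Lemma Fb_base a : (n + Vc)%:R <= Fb a.
Proof. by rewrite /Fb lerDl sumr_ge0 // => k _; apply: tF_ge0. Qed.

Lemma Fb_mono a b : (a <= b)%N -> Fb a <= Fb b.
Proof.
elim: b => [|b IH]; first by rewrite leqn0 => /eqP ->.
rewrite leq_eqVlt => /orP [/eqP ->|]; first exact: lexx.
rewrite ltnS => /IH H; rewrite FbS; apply: le_trans H _; by rewrite lerDl tF_ge0.
Qed.

Lemma inv_le a b : (0 < a)%N -> (a <= b)%N -> (b%:R : R)^-1 <= (a%:R)^-1.
Proof.
move=> Ha Hab; rewrite lef_pV2 ?posrE ?ltr0n ?ler_nat //.
exact: leq_trans Hab.
Qed.

Lemma Fb_marked a : (0 < a)%N -> (Lr n a)%:R + n%:R + Vc%:R <= Fb a.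
Proof.
case: a => // a _; rewrite FbS.
have := Fb_base a; rewrite natrD.
have : 0 <= 3 * n%:R / a.+1%:R :> R by rewrite divr_ge0 // mulr_ge0.
move=> H1 H2; set t := 3 * n%:R / a.+1%:R in H1 *; lra.
Qed.

Lemma Fb_lin z b a : (0 < a)%N -> (z <= b)%N -> (b <= a)%N ->
  Fb z + (b - z)%:R * (3 * n%:R / a%:R) <= Fb b.
Proof.
move=> Ha; elim: b => [|b IH].
  by rewrite leqn0 => /eqP -> _; rewrite subn0 mul0r addr0.
rewrite leq_eqVlt => /orP [/eqP ->|]; first by rewrite subnn mul0r addr0.
rewrite ltnS => Hzb Hba.
have H := IH Hzb (ltnW Hba).
have Hc : 3 * n%:R / a%:R <= 3 * n%:R / b.+1%:R :> R.
  by rewrite ler_wpM2l ?mulr_ge0 // inv_le.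
have HL : 0 <= (Lr n b.+1)%:R :> R by [].
have -> : (b.+1 - z)%:R = (b - z)%:R + 1 :> R by rewrite subSn // -natr1.
rewrite mulrDl mul1r FbS.
move: H Hc HL.
set c1 := 3 * n%:R / a%:R; set c2 := 3 * n%:R / b.+1%:R; set d := (b - z)%:R * c1.
lra.
Qed.

Lemma Fb_poor z a : (2 * z < a)%N -> (Lr n a)%:R + n%:R + Fb z <= Fb a.
Proof.
move=> Hza; case: a Hza => // a Hza; rewrite FbS.
have Hz : (z <= a)%N by lia.
have := Fb_lin (isT : (0 < a.+1)%N) Hz (leqnSn a).
have : n%:R <= (a - z)%:R * (3 * n%:R / a.+1%:R) + 3 * n%:R / a.+1%:R :> R.
  rewrite -[X in _ <= _ + X]mul1r -mulrDl mulrA ler_pdivlMr ?ltr0n //.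
  have H : (n * a.+1 <= (a - z).+1 * 3 * n)%N by nia.
  have E : ((a - z).+1 * 3 * n)%:R = ((a - z)%:R + 1) * (3 * n%:R) :> R.
    by rewrite !natrM -[(a - z).+1%:R]natr1 mulrA.
  by rewrite -E -natrM ler_nat.
set c1 := 3 * n%:R / a.+1%:R; set d := (a - z)%:R * c1.
lra.
Qed.

Lemma Fb_rich a : (0 < a)%N -> (Lr n a)%:R + Fb a.-1 + n%:R / a%:R <= Fb a.
Proof.
case: a => // a _; rewrite FbS /=.
have : n%:R / a.+1%:R <= 3 * n%:R / a.+1%:R :> R.
  rewrite ler_wpM2r ?invr_ge0 ?ler0n //; have : 0 <= n%:R :> R by []. lra.
set c1 := 3 * n%:R / a.+1%:R; set c2 := n%:R / a.+1%:R.
lra.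
Qed.

Lemma Lr_le a : (0 < a)%N -> (a <= m)%N -> (Lr n a <= Lmax)%N.
Proof.
move=> Ha Ham; rewrite /Lr /Lmax leq_mul //; last exact: leq_up_log.
rewrite -ltnS ltn_divLR //; nia.
Qed.


Lemma sum_const_seq T (l : seq T) (c : R) : \sum_(r <- l) c = (size l)%:R * c.
Proof.
by elim: l => [|t l IH]; rewrite ?big_nil ?mul0r // big_cons IH /= -natr1 mulrDl mul1r addrC.
Qed.

Lemma count_col (x : cell n m -> Sigma n m) j :
  count (@zerov n m) (map x (colcells n j)) = count (fun i => zerov (x (i, j))) (enum 'I_n).
Proof. by rewrite /colcells -map_comp count_map. Qed.

Lemma count_val (x : cell n m -> Sigma n m) j :
  (count (fun i => val_of (x (i, j))) (enum 'I_n) + count (fun i => zerov (x (i, j))) (enum 'I_n))%N = n.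
Proof.
rewrite -[X in _ = X](size_enum_ord n) -(count_predC (fun i => val_of (x (i, j)))).
by congr (_ + _)%N; apply: eq_count => i.
Qed.

Lemma found_all (x : cell n m -> Sigma n m) j (t : seq 'I_n) :
  ~~ has (fun i => zerov (x (i, j))) t = all (fun i => val_of (x (i, j))) t.
Proof. by rewrite -all_predC; apply: eq_all => i /=; rewrite /zerov negbK. Qed.

Lemma size_Sd : size Sd = (n ^ Lmax)%N.
Proof. by rewrite size_all_seqs size_enum_ord. Qed.

Lemma round_bound (x : cell n m -> Sigma n m) j (A0 : seq 'I_m) :
  uniq (j :: A0) ->
  \sum_(s <- Sd) ((Lr n (size A0).+1)%:R +
     (if has (fun i => zerov (x (i, j))) (take (Lr n (size A0).+1) s) then Fb (size A0)
      else n%:R + (if all val_of (map x (colcells n j)) then Vc%:R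
                   else Fb (size [seq b <- A0 | hasB (map x (colcells n j)) b]))))
  <= (size Sd)%:R * Fb (size A0).+1.
Proof.
move=> Hu; have Hu0 : uniq A0 by case/andP: Hu.
have Ham : ((size A0).+1 <= m)%N by apply: (uniq_size_m Hu).
set a := (size A0).+1; set L := Lr n a; set vs := map x (colcells n j).
set z := count (fun i => zerov (x (i, j))) (enum 'I_n).
have Hvz : count (@zerov n m) vs = z by rewrite /vs count_col.
have HA' : (size [seq b <- A0 | hasB vs b] <= z)%N by rewrite -Hvz; apply: sizeAp.
have HA'0 : (size [seq b <- A0 | hasB vs b] <= size A0)%N by rewrite size_filter count_size.
have Hmk : all val_of vs = (z == 0)%N by rewrite allval_count Hvz.
case: (ltnP (2 * z) a) => Hz.
  rewrite -sum_const_seq; apply: ler_sum => s _.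
  case: ifP => _.
    have := Fb_rich (isT : (0 < a)%N); rewrite /= -/L.
    have : 0 <= n%:R / a%:R :> R by rewrite divr_ge0.
    set c := n%:R / a%:R; lra.
  case: ifP => Hm.
    have := Fb_marked (isT : (0 < a)%N); rewrite -/L; lra.
  have Hz0 : (0 < z)%N by rewrite lt0n -Hmk Hm.
  have := Fb_poor Hz; rewrite -/L.
  have := Fb_mono HA'.
  lra.
have Hm : all val_of vs = false by rewrite Hmk; apply/negbTE; rewrite -lt0n; lia.
apply: (@le_trans _ _ (\sum_(s <- Sd) ((L%:R + Fb (size A0)) +
          n%:R * (all (fun i => val_of (x (i, j))) (take L s) : nat)%:R))).
  apply: ler_sum => s _; rewrite -found_all Hm.
  case: ifP => _ /=; first by rewrite mulr0 addr0.
  rewrite mulr1.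
  have := Fb_mono HA'0.
  lra.
rewrite big_split /= sum_const_seq -big_distrr /= -natr_sum.
rewrite sum_take_all; last first.
  by rewrite /L; apply: Lr_le.
have Hcnt : count (fun i => val_of (x (i, j))) (enum 'I_n) = (n - z)%N.
  by have := count_val x j; rewrite -/z; lia.
rewrite Hcnt size_enum_ord.
have Hkey : (a * ((n - z) ^ L * n ^ (Lmax - L)) <= size Sd)%N.
  rewrite size_Sd mulnA.
  have HL : (L <= Lmax)%N by rewrite /L; apply: Lr_le.
  rewrite -{2}(subnKC HL) expnD leq_mul2r; apply/orP; right.
  apply: rich_count => //.
  by rewrite /z -[X in (_ <= X)%N](size_enum_ord n) count_size.
have Hn' : n%:R * ((n - z) ^ L * n ^ (Lmax - L))%:R <= (size Sd)%:R * (n%:R / a%:R) :> R.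
  rewrite mulrA ler_pdivlMr ?ltr0n // -!natrM ler_nat.
  move: Hkey; set X := ((n - z) ^ L * n ^ (Lmax - L))%N; set Y := size Sd. nia.
have := Fb_rich (isT : (0 < a)%N); rewrite /= -/L => HF.
have Hsz : 0 <= (size Sd)%:R :> R by [].
apply: (@le_trans _ _ ((size Sd)%:R * (L%:R + Fb (size A0) + n%:R / a%:R))).
  by rewrite !mulrDr lerD2l.
by rewrite ler_wpM2l.
Qed.


Lemma size_take_le T k (t : seq T) : (size (take k t) <= k)%N.
Proof. by rewrite size_take; case: ifP => // /negbT; rewrite -leqNgt. Qed.

Lemma loop_cost (x : cell n m -> Sigma n m) k (A : seq 'I_m) : uniq A -> (size A <= k)%N ->
  \sum_(seeds <- all_seqs Sd k) ((runQ (loopQ k A seeds) x).2)%:R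
    <= ((size Sd ^ k)%N)%:R * Fb (size A).
Proof.
elim: k A => [|k IH] A Hu Hs.
  case: A Hu Hs => // _ _; rewrite /= big_cons big_nil /= addr0 expn0 mul1r.
  exact: Fb_ge0.
case: A Hu Hs => [|j A0] Hu Hs.
  rewrite big1 ?mulr_ge0 ?Fb_ge0 //.
have Hu0 : uniq A0 by case/andP: Hu.
have Hs0 : (size A0 <= k)%N by [].
rewrite /= big_allpairs_dep /=.
set L := Lr n (size A0).+1.
set vs := map x (colcells n j).
pose G (s : seq 'I_n) : R :=
  (if has (fun i => zerov (x (i, j))) (take L s) then Fb (size A0)
   else n%:R + (if all val_of vs then Vc%:R else Fb (size [seq b <- A0 | hasB vs b]))).
apply: (@le_trans _ _ (\sum_(s <- Sd) ((size Sd ^ k)%N%:R * (L%:R + G s)))).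
  apply: ler_sum => s _.
  set cl := [seq (i, j) | i <- take L s].
  have Hcs : ((runQ (searchQ (@zerov n m) cl) x).2 <= L)%N.
    by apply: leq_trans (searchQ2 _ _ _) _; rewrite size_map size_take_le.
  have Hf : isSome (runQ (searchQ (@zerov n m) cl) x).1 = has (fun i => zerov (x (i, j))) (take L s).
    by rewrite searchQ_None has_map.
  under eq_bigr => r _ do rewrite runQ_bind2 natrD.
  rewrite big_split /= sum_const_seq size_all_seqs mulrDr lerD //.
    by rewrite ler_wpM2l // ler_nat.
  rewrite /G -Hf.
  case E: (runQ (searchQ (@zerov n m) cl) x).1 => [c|] /=.
    exact: IH.
  under eq_bigr => r _ do rewrite runQ_bind2 natrD queryAll2 queryAll1.
  rewrite big_split /= sum_const_seq size_all_seqs mulrDr size_map size_enum_ord lerD //.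
  rewrite -/vs; case: ifP => _.
    apply: (@le_trans _ _ (\sum_(r <- all_seqs Sd k) (Vc%:R : R))).
      by apply: ler_sum => r _; rewrite ler_nat; apply: verifyQ2.
    by rewrite sum_const_seq size_all_seqs.
  apply: IH; first exact: filter_uniq.
  by rewrite size_filter (leq_trans (count_size _ _)).
rewrite -big_distrr /= expnS natrM -mulrA mulrCA ler_wpM2l //.
exact: round_bound.
Qed.

End Cost.

Section Final.
Variables (R : realType) (n m : nat).
Hypotheses (Hn : (0 < n)%N) (Hm : (0 < m)%N).
Local Open Scope ring_scope.

Let U := up_log 2 (n + m).
Let Hs := \sum_(k < m) (k.+1%:R : R)^-1.

Lemma Hs_ge0 : 0 <= Hs.
Proof. by rewrite sumr_ge0 // => k _; rewrite invr_ge0. Qed.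

Lemma Hs_le : Hs <= U.+1%:R.
Proof.
apply: le_trans (harm R m) _; rewrite ler_nat ltnS /U.
by apply: leq_up_log; rewrite leq_addl.
Qed.

Lemma T_le : (trunc_log 2 m <= U)%N.
Proof.
rewrite trunc_log_up_log //; apply: leq_trans (leq_pred _) _.
by apply: leq_up_log; rewrite -addn1 addnC leq_add2r.
Qed.

Lemma Lr_sum : \sum_(k < m) ((Lr n k.+1)%:R : R) <= U%:R * (2 * n%:R * Hs + m%:R).
Proof.
apply: (@le_trans _ _ (\sum_(k < m) U%:R * (2 * n%:R * k.+1%:R^-1 + 1))); last first.
  rewrite -big_distrr big_split /= sumr_const card_ord -mulr_sumr /Hs.
  by rewrite -[m%:R]mulr1n -mulr_natl mulr1 mulr1n.
apply: ler_sum => k _.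
rewrite /Lr natrM mulrC.
have HU : ((up_log 2 k.+1)%:R : R) <= U%:R.
  rewrite ler_nat /U; apply: leq_up_log.
  by apply: leq_trans (ltn_ord k) _; rewrite leq_addl.
have Hq : (((2 * n + k.+1 - 1) %/ k.+1)%:R : R) <= 2 * n%:R * k.+1%:R^-1 + 1.
  rewrite -(ler_pM2r (_ : 0 < k.+1%:R :> R)) ?ltr0n // mulrDl mul1r divfK ?pnatr_eq0 //.
  have -> : 2 * n%:R + k.+1%:R = ((2 * n + k.+1)%:R : R) by rewrite natrD natrM.
  rewrite -natrM ler_nat.
  apply: leq_trans (leq_trunc_div _ _) _; lia.
by apply: ler_pM.
Qed.

Lemma Fb_final : Fb R n m m <= (10 * (n + m) * U.+1 ^ 2)%:R.
Proof.
rewrite /Fb big_split /= -big_distrr /= -/Hs.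
have H1 := Lr_sum.
have H2 := Hs_le.
have H3 := Hs_ge0.
have HT : ((trunc_log 2 m)%:R : R) <= U%:R by rewrite ler_nat T_le.
have HVc : ((n + Vc n m)%:R : R) = n%:R + (n%:R + m%:R * ((trunc_log 2 m)%:R + 2)).
  by rewrite /Vc !natrD natrM -addn2 natrD.
rewrite HVc.
have -> : ((10 * (n + m) * U.+1 ^ 2)%:R : R) = 10 * (n%:R + m%:R) * (U%:R + 1) ^+ 2.
  by rewrite !natrM natrD -[U.+1%:R]natr1 expr2.
move: H2; rewrite -[U.+1%:R]natr1 => H2.
move: H1 H2 H3 HT.
set u := U%:R : R; set nn := n%:R : R; set mm := m%:R : R; set h := Hs.
set t := (trunc_log 2 m)%:R : R; set L := \sum_(i < m) _.
move=> H1 H2 H3 HT.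
have Hu0 : 0 <= u by []. have Hn0 : 0 <= nn by []. have Hm0 : 0 <= mm by [].
have P1 : u * nn * h <= u * nn * (u + 1) by rewrite ler_wpM2l ?mulr_ge0.
have P2 : nn * h <= nn * (u + 1) by rewrite ler_wpM2l.
have P3 : mm * t <= mm * u by rewrite ler_wpM2l.
have P4 : 0 <= u * nn by rewrite mulr_ge0.
have P5 : 0 <= u * mm by rewrite mulr_ge0.
have P6 : 0 <= u * u * nn by rewrite !mulr_ge0.
have P7 : 0 <= u * u * mm by rewrite !mulr_ge0.
nra.
Qed.

End Final.

Unset Implicit Arguments.
Local Open Scope ring_scope.

Theorem theorem4 (R : realType) :
  exists (C c : nat), forall n m : nat, (0 < n)%N -> (0 < m)%N ->
    exists D : rdtree R (cell n m) (Sigma n m),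
      zero_error D (@f_nm n m) /\
      forall x : cell n m -> Sigma n m,
        exp_queries D x <= (C * (n + m) * (up_log 2 (n + m)).+1 ^ c)%:R.
Proof.
exists 10%N, 2%N => n m Hn Hm.
set S := Sd n m.
set N := (size S ^ m)%N.
have HN : (0 < N)%N by rewrite /N /S size_Sd !expn_gt0 Hn.
have HN0 : (N%:R : R) != 0 by rewrite pnatr_eq0 -lt0n.
set w : R := (N%:R)^-1.
exists [seq (w, toD (loopQ m (enum 'I_m) seeds)) | seeds <- all_seqs S m].
split.
  split.
    split.
      move=> p; rewrite -map_comp => /mapP [seeds _ ->] /=.
      by rewrite /w invr_ge0.
    by rewrite big_map /= sum_const_seq size_all_seqs -/N mulfV.
  move=> i Hi /= _ x.
  rewrite size_map in Hi.
  rewrite (nth_map [::]) //= run_toD.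
  apply: loop_correct; first exact: enum_uniq.
    by rewrite size_enum_ord.
  by move=> b; rewrite mem_enum.
move=> x; rewrite /exp_queries big_map /=.
under eq_bigr do rewrite run_toD.
rewrite -mulr_sumr.
apply: (@le_trans _ _ (w * (N%:R * Fb R n m m))).
  rewrite ler_wpM2l ?invr_ge0 //.
  have := @loop_cost R n m Hn x m (enum 'I_m) (enum_uniq _).
  by rewrite size_enum_ord => /(_ (leqnn m)).
by rewrite mulrA mulVf // mul1r; apply: Fb_final.
Qed.
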